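(* Up to scaling, isometries of $\mathbf R^{1,1}$ and translations, there are exactly three space-like curves that translate under the mean curvature flow: \begin{itemize} \item $\cosh x = e^{y-t}$, with curvature $k=\frac{1}{\cos s}$, $-\frac\pi2<s<\frac\pi2$, translating along the $y$-axis; \item $\sinh y = e^{t-x}$, with $k = \frac{1}{\sinh s}$, $s>0$, translating along the $x$-axis; \item $\xi = e^{\eta}+t$, with $k=\frac1s$, $s>0$, translating along the $\xi$-axis. \end{itemize}
   Context: $\mathbf R^{1,1}$ is $\mathbf R^2$ with $\langle (x_1,y_1),(x_2,y_2)\rangle = x_1x_2-y_1y_2$; points $x+hy$, $h^2=1$. Light-like coordinates: $\xi=x+y$, $\eta=x-y$; the $\xi$-axis is the line $y=x$. For a space-like curve ($\langle X_u,X_u\rangle>0$), $s$ is Minkowski arc-length, $T=X_s$, $N=hT$, $T_s=kN$. A family $X(\cdot,t)$ moves by mean curvature flow if $\langle\partial_tX,N\rangle=-k$; a curve translates with velocity $C$ if $X+Ct$ is such a flow, equivalently $-\langle C,N\rangle=k$. *)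

(* Defs.v *)
From Stdlib Require Import Reals.
From Coquelicot Require Import Coquelicot.
Open Scope R_scope.

Definition pt := (R * R)%type.

Definition mink (p q : pt) : R := fst p * fst q - snd p * snd q.

(** Multiplication by h (h^2 = 1): h (x + h y) = y + h x. *)
Definition hmul (p : pt) : pt := (snd p, fst p).

Definition in_ivl (a b : Rbar) (s : R) : Prop := Rbar_lt a s /\ Rbar_lt s b.

Definition tangent (X : R -> pt) (s : R) : pt :=
  (Derive (fun u => fst (X u)) s, Derive (fun u => snd (X u)) s).
Definition tangent' (X : R -> pt) (s : R) : pt :=
  (Derive (fun u => fst (tangent X u)) s, Derive (fun u => snd (tangent X u)) s).

Definition normal (X : R -> pt) (s : R) : pt := hmul (tangent X s).

Definition unit_speed_curve (a b : Rbar) (X : R -> pt) : Prop :=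
  forall s, in_ivl a b s ->
    ex_derive (fun u => fst (X u)) s /\ ex_derive (fun u => snd (X u)) s /\
    ex_derive (fun u => fst (tangent X u)) s /\
    ex_derive (fun u => snd (tangent X u)) s /\
    mink (tangent X s) (tangent X s) = 1.

Definition has_curvature (a b : Rbar) (X : R -> pt) (k : R -> R) : Prop :=
  forall s, in_ivl a b s ->
    tangent' X s = (k s * fst (normal X s), k s * snd (normal X s)).

(** The curve translates with velocity C under mean curvature flow:
    - <C, N> = k. *)
Definition translator (a b : Rbar) (X : R -> pt) (C : pt) (k : R -> R) : Prop :=
  forall s, in_ivl a b s -> - mink C (normal X s) = k s.

(** Similarities of R^{1,1}: p |-> lam * L p + b0 with lam > 0 (scaling),
    L linear preserving the Minkowski form (isometry), b0 a translation. *)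
Definition similarity (F : pt -> pt) : Prop :=
  exists (lam a11 a12 a21 a22 b1 b2 : R),
    let L := fun p : pt => (a11 * fst p + a12 * snd p, a21 * fst p + a22 * snd p) in
    0 < lam /\
    (forall p q, mink (L p) (L q) = mink p q) /\
    (forall p, F p = (lam * fst (L p) + b1, lam * snd (L p) + b2)).

(** The three model translators (at time t = 0). *)
Inductive model := M1 | M2 | M3.

Definition dom_lo (m : model) : Rbar :=
  match m with M1 => Finite (- (PI / 2)) | M2 => Finite 0 | M3 => Finite 0 end.
Definition dom_hi (m : model) : Rbar :=
  match m with M1 => Finite (PI / 2) | M2 => p_infty | M3 => p_infty end.

Definition gamma (m : model) (s : R) : pt :=
  match m with
  | M1 => (ln ((1 + sin s) / cos s), - ln (cos s))
  | M2 => (ln (sinh s), ln ((exp s + 1) / (exp s - 1)))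
  | M3 => (s ^ 2 / 8 + ln (s / 2), s ^ 2 / 8 - ln (s / 2))
  end.

(** The curves as point sets (t = 0), xi = x + y, eta = x - y:
    M1 : cosh x = e^y,  M2 : sinh y = e^{-x},  M3 : xi = e^eta. *)
Definition model_set (m : model) (p : pt) : Prop :=
  match m with
  | M1 => cosh (fst p) = exp (snd p)
  | M2 => sinh (snd p) = exp (- fst p)
  | M3 => fst p + snd p = exp (fst p - snd p)
  end.

Definition model_curv (m : model) (s : R) : R :=
  match m with M1 => 1 / cos s | M2 => 1 / sinh s | M3 => 1 / s end.

(** Translation velocities (from the time dependence of the equations):
    along the y-axis, the x-axis and the xi-axis respectively. *)
Definition model_vel (m : model) : pt :=
  match m with M1 => (0, 1) | M2 => (1, 0) | M3 => (1 / 2, 1 / 2) end.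

(* Main.v *)
Require Import Defs.
From Stdlib Require Import Reals Lra Psatz Nsatz.
From Coquelicot Require Import Coquelicot.
Open Scope R_scope.

Lemma ivl_ball (a b : Rbar) s : in_ivl a b s ->
  exists e, 0 < e /\ forall t, Rabs (t - s) < e -> in_ivl a b t.
Proof.
  intros [Ha Hb].
  destruct a as [ra| |]; destruct b as [rb| |]; simpl in *; try contradiction.
  - exists (Rmin (s - ra) (rb - s)). split. apply Rmin_glb_lt; lra.
    intros t Ht. pose proof (Rmin_l (s-ra) (rb-s)). pose proof (Rmin_r (s-ra) (rb-s)).
    apply Rabs_def2 in Ht; destruct Ht; unfold in_ivl; simpl; split; lra.
  - exists (s - ra). split. lra. intros t Ht. apply Rabs_def2 in Ht; destruct Ht; unfold in_ivl; simpl; split; lra.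
  - exists (rb - s). split. lra. intros t Ht. apply Rabs_def2 in Ht; destruct Ht; unfold in_ivl; simpl; split; lra.
  - exists 1. split. lra. intros; unfold in_ivl; simpl; auto.
Qed.

Lemma ivl_locally (a b : Rbar) s : in_ivl a b s -> locally s (fun t => in_ivl a b t).
Proof.
  intros H. destruct (ivl_ball a b s H) as [e [He H']].
  exists (mkposreal e He). intros t Ht. apply H'. exact Ht.
Qed.

Lemma D_const c x : is_derive (fun _ => c) x 0.
Proof. exact (is_derive_const (K:=R_AbsRing) (V:=R_NormedModule) c x). Qed.

Lemma deriv_zero_loc (a b : Rbar) (f : R -> R) s l :
  in_ivl a b s -> (forall t, in_ivl a b t -> f t = 0) -> is_derive f s l -> l = 0.
Proof.
  intros Hs H0 Hd.
  assert (Hd' : is_derive (fun _ => 0) s l).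
  { eapply is_derive_ext_loc; [|exact Hd].
    generalize (ivl_locally a b s Hs). apply filter_imp. intros; auto. }
  assert (Hc := D_const 0 s).
  rewrite <- (is_derive_unique _ _ _ Hd'). apply is_derive_unique; auto.
Qed.

Lemma ivl_conv (a b : Rbar) s t u : in_ivl a b s -> in_ivl a b t ->
  Rmin s t <= u <= Rmax s t -> in_ivl a b u.
Proof.
  intros [H1 H2] [H3 H4] [H5 H6]. split.
  - destruct a as [ra| |]; simpl in *; auto.
    pose proof (Rmin_glb_lt _ _ _ H1 H3). lra.
  - destruct b as [rb| |]; simpl in *; auto.
    pose proof (Rmax_lub_lt _ _ _ H2 H4). lra.
Qed.

Lemma const_ivl (a b : Rbar) (f : R -> R) :
  (forall s, in_ivl a b s -> is_derive f s 0) ->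
  forall s t, in_ivl a b s -> in_ivl a b t -> f t = f s.
Proof.
  intros Hd s t Hs Ht.
  destruct (MVT_gen f s t (fun _ => 0)) as [c [_ Hc]].
  - intros x Hx. apply Hd. apply (ivl_conv a b s t); auto. lra.
  - intros x Hx. apply continuity_pt_filterlim. apply (ex_derive_continuous (K:=R_AbsRing) (V:=R_NormedModule)).
    eexists. apply Hd. apply (ivl_conv a b s t); auto.
  - lra.
Qed.

Lemma D_eq (f : R -> R) (x l l' : R) : is_derive f x l -> l = l' -> is_derive f x l'.
Proof. intros H ->; auto. Qed.
Lemma D_mul (f g : R -> R) (x df dg : R) : is_derive f x df -> is_derive g x dg ->
  is_derive (fun t => f t * g t) x (df * g x + f x * dg).
Proof. intros. apply (is_derive_mult f g x df dg); auto. intros; apply Rmult_comm. Qed.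
Lemma D_plus (f g : R -> R) (x df dg : R) : is_derive f x df -> is_derive g x dg ->
  is_derive (fun t => f t + g t) x (df + dg).
Proof. intros. apply (is_derive_plus f g x df dg); auto. Qed.
Lemma D_minus (f g : R -> R) (x df dg : R) : is_derive f x df -> is_derive g x dg ->
  is_derive (fun t => f t - g t) x (df - dg).
Proof. intros. apply (is_derive_minus f g x df dg); auto. Qed.

Lemma D_exp (f : R -> R) (x df : R) : is_derive f x df -> is_derive (fun t => exp (f t)) x (df * exp (f x)).
Proof. intros H. apply (is_derive_comp exp f x (exp (f x)) df); auto. apply is_derive_exp. Qed.
Lemma D_scal (c : R) (f : R -> R) (x df : R) : is_derive f x df -> is_derive (fun t => c * f t) x (c * df).
Proof. intros H. apply is_derive_scal; auto. Qed.

Definition Fd (mu nu c d : R) (p : pt) : pt :=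
  (((mu+nu)/2)*fst p + ((mu-nu)/2)*snd p + (c+d)/2,
   ((mu-nu)/2)*fst p + ((mu+nu)/2)*snd p + (c-d)/2).
Definition Fa (mu nu c d : R) (p : pt) : pt :=
  (((mu+nu)/2)*fst p + ((nu-mu)/2)*snd p + (c+d)/2,
   ((mu-nu)/2)*fst p - ((mu+nu)/2)*snd p + (c-d)/2).

Lemma sim_diag mu nu c d : 0 < mu * nu -> similarity (Fd mu nu c d).
Proof.
  intros H. set (l := sqrt (mu*nu)).
  assert (Hl : 0 < l) by (apply sqrt_lt_R0; auto).
  assert (Hll : l * l = mu * nu) by (apply sqrt_sqrt; lra).
  set (il := / l).
  assert (Hil : il * il * (mu * nu) = 1) by (unfold il; rewrite <- Hll; field; lra).
  exists l, ((mu+nu)/2*il), ((mu-nu)/2*il), ((mu-nu)/2*il), ((mu+nu)/2*il), ((c+d)/2), ((c-d)/2).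
  simpl. split; [auto|split].
  - intros [x1 y1] [x2 y2]. unfold mink; simpl.
    transitivity (il*il*(mu*nu)*(x1*x2 - y1*y2)); [field|]. rewrite Hil; ring.
  - intros [x1 y1]. unfold Fd; simpl. f_equal; unfold il; field; lra.
Qed.

Lemma sim_anti mu nu c d : 0 < mu * nu -> similarity (Fa mu nu c d).
Proof.
  intros H. set (l := sqrt (mu*nu)).
  assert (Hl : 0 < l) by (apply sqrt_lt_R0; auto).
  assert (Hll : l * l = mu * nu) by (apply sqrt_sqrt; lra).
  set (il := / l).
  assert (Hil : il * il * (mu * nu) = 1) by (unfold il; rewrite <- Hll; field; lra).
  exists l, ((mu+nu)/2*il), ((nu-mu)/2*il), ((mu-nu)/2*il), (-((mu+nu)/2)*il), ((c+d)/2), ((c-d)/2).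
  simpl. split; [auto|split].
  - intros [x1 y1] [x2 y2]. unfold mink; simpl.
    transitivity (il*il*(mu*nu)*(x1*x2 - y1*y2)); [field|]. rewrite Hil; ring.
  - intros [x1 y1]. unfold Fa; simpl. f_equal; unfold il; field; lra.
Qed.

Lemma Fd_xi mu nu c d p : fst (Fd mu nu c d p) + snd (Fd mu nu c d p) = mu * (fst p + snd p) + c.
Proof. unfold Fd; simpl; field. Qed.
Lemma Fd_eta mu nu c d p : fst (Fd mu nu c d p) - snd (Fd mu nu c d p) = nu * (fst p - snd p) + d.
Proof. unfold Fd; simpl; field. Qed.
Lemma Fa_xi mu nu c d p : fst (Fa mu nu c d p) + snd (Fa mu nu c d p) = mu * (fst p - snd p) + c.
Proof. unfold Fa; simpl; field. Qed.
Lemma Fa_eta mu nu c d p : fst (Fa mu nu c d p) - snd (Fa mu nu c d p) = nu * (fst p + snd p) + d.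
Proof. unfold Fa; simpl; field. Qed.

Lemma ms1 (p : pt) : exp (fst p - snd p) + exp (- (fst p + snd p)) = 2 -> model_set M1 p.
Proof.
  destruct p as [X Y]; simpl. intros H. unfold cosh.
  rewrite Rminus_def, exp_plus in H. rewrite Ropp_plus_distr, exp_plus in H.
  assert (E1 : exp Y * exp (-Y) = 1) by (rewrite <- exp_plus, Rplus_opp_r; apply exp_0).
  assert (0 < exp Y) by apply exp_pos.
  apply (Rmult_eq_reg_r (exp (-Y))). 2:{ pose proof (exp_pos (-Y)); lra. }
  rewrite E1. nra.
Qed.

Lemma ms2 (p : pt) : exp (fst p + snd p) - exp (fst p - snd p) = 2 -> model_set M2 p.
Proof.
  destruct p as [X Y]; simpl. intros H. unfold sinh.
  assert (A1 : exp (X - Y) = exp X * exp (-Y)) by (unfold Rminus; apply exp_plus).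
  rewrite A1, exp_plus in H.
  assert (E1 : exp X * exp (-X) = 1) by (rewrite <- exp_plus, Rplus_opp_r; apply exp_0).
  apply (Rmult_eq_reg_l (exp X)). 2:{ pose proof (exp_pos X); lra. }
  rewrite E1. transitivity ((exp X * exp Y - exp X * exp (-Y))/2); [field|]. lra.
Qed.

Ltac dstep := lazymatch goal with
 | |- is_derive (fun _ => ?c) _ _ => apply D_const
 | |- is_derive (fun t => _ * _) _ _ => apply D_mul
 | |- is_derive (fun t => _ + _) _ _ => apply D_plus
 | |- is_derive (fun t => _ - _) _ _ => apply D_minus
 | |- is_derive (fun t => exp _) _ _ => apply D_exp
 | _ => eassumption end.
Ltac dtac := repeat dstep.

Lemma exp_ln_add a c : 0 < c -> exp (a + ln c) = c * exp a.
Proof. intros H. rewrite exp_plus, exp_ln; auto; ring. Qed.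
Lemma exp_ln_sub a c : 0 < c -> exp (a - ln c) = exp a / c.
Proof. intros H. unfold Rminus. rewrite exp_plus, exp_Ropp, exp_ln; auto. Qed.

Lemma L_pos X Y Z : X*Y = Z -> 0 < Y -> 0 < Z -> 0 < X.
Proof. intros. nra. Qed.
Lemma L_neg X Y Z : X*Y = Z -> 0 < Y -> Z < 0 -> X < 0.
Proof. intros. nra. Qed.
Lemma L_both c1 c2 A B : 0 < c1*c2 -> c1*A + c2*B = 1 -> 0 < A -> 0 < B -> 0 < c1 /\ 0 < c2.
Proof. intros. destruct (Rlt_or_le 0 c1); split; nra. Qed.
Lemma L_opp1 c1 c2 : c1*c2 < 0 -> 0 < c1 -> c2 < 0.
Proof. intros. nra. Qed.
Lemma L_opp2 c1 c2 : c1*c2 < 0 -> c1 < 0 -> 0 < c2.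
Proof. intros. nra. Qed.
Lemma L_sq4 a K : a <> 0 -> 0 < K -> 0 < (2*a*K)*(2*a).
Proof. intros. assert (0 < a*a) by (pose proof (Rsqr_pos_lt _ H); unfold Rsqr in *; lra). nra. Qed.
Lemma L_sq4' a K : a <> 0 -> 0 < K -> 0 < (-2*a*K)*(-2*a).
Proof. intros. assert (0 < a*a) by (pose proof (Rsqr_pos_lt _ H); unfold Rsqr in *; lra). nra. Qed.
Lemma L_m1 a b : 0 < a*b -> 0 < (2*a)*(2*b).
Proof. intros. nra. Qed.
Lemma L_m2 a b : a*b < 0 -> 0 < (2*b)*(-2*a).
Proof. intros. nra. Qed.
Lemma L_m3 a b : a*b < 0 -> 0 < (-2*a)*(2*b).
Proof. intros. nra. Qed.

Lemma classify (a b : Rbar) (x y p q k : R -> R) (C1 C2 : R) s0 :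
  (forall s, in_ivl a b s -> is_derive x s (p s) /\ is_derive y s (q s) /\
      is_derive p s (k s * q s) /\ is_derive q s (k s * p s) /\
      p s * p s - q s * q s = 1 /\ C2 * p s - C1 * q s = k s) ->
  in_ivl a b s0 -> k s0 <> 0 ->
  exists F m, similarity F /\ forall s, in_ivl a b s -> model_set m (F (x s, y s)).
Proof.
  intros H Hs0 Hk0.
  set (al := (C2 - C1)/2). set (be := (C2 + C1)/2).
  assert (Hk : forall s, in_ivl a b s -> k s = al*(p s + q s) + be*(p s - q s)).
  { intros s Hs. destruct (H s Hs) as (_&_&_&_&_&E). rewrite <- E. unfold al, be. field. }
  clearbody al be.
  set (Pf := fun t => (al*((p t+q t)*(p t+q t)) + be) * exp ((-2*al)*(x t + y t))).
  set (Sf := fun t => (al + be*((p t-q t)*(p t-q t))) * exp ((2*be)*(x t - y t))).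
  set (Uf := fun t => (p t+q t)*(p t+q t) - 2*be*(x t + y t)).
  set (Vf := fun t => (p t-q t)*(p t-q t) + 2*al*(x t - y t)).
  assert (HP : forall s, in_ivl a b s -> Pf s = Pf s0).
  { intros s1 Hs1. apply (const_ivl a b Pf); auto. clear s1 Hs1. intros s Hs. generalize (Hk s Hs).
    destruct (H s Hs) as (Hx&Hy&Hp&Hq&Hpq&_). intros Hks.
    unfold Pf. eapply D_eq. dtac. nsatz. }
  assert (HS : forall s, in_ivl a b s -> Sf s = Sf s0).
  { intros s1 Hs1. apply (const_ivl a b Sf); auto. clear s1 Hs1. intros s Hs. generalize (Hk s Hs).
    destruct (H s Hs) as (Hx&Hy&Hp&Hq&Hpq&_). intros Hks.
    unfold Sf. eapply D_eq. dtac. nsatz. }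
  assert (HU : al = 0 -> forall s, in_ivl a b s -> Uf s = Uf s0).
  { intros Hal. intros s1 Hs1. apply (const_ivl a b Uf); auto. clear s1 Hs1. intros s Hs. generalize (Hk s Hs).
    destruct (H s Hs) as (Hx&Hy&Hp&Hq&Hpq&_). intros Hks.
    unfold Uf. eapply D_eq. dtac. subst al. nsatz. }
  assert (HV : be = 0 -> forall s, in_ivl a b s -> Vf s = Vf s0).
  { intros Hbe. intros s1 Hs1. apply (const_ivl a b Vf); auto. clear s1 Hs1. intros s Hs. generalize (Hk s Hs).
    destruct (H s Hs) as (Hx&Hy&Hp&Hq&Hpq&_). intros Hks.
    unfold Vf. eapply D_eq. dtac. subst be. nsatz. }
  assert (Huv : forall s, in_ivl a b s -> (p s + q s) * (p s - q s) = 1).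
  { intros s Hs. destruct (H s Hs) as (_&_&_&_&Hpq&_). nsatz. }
  assert (E1p : forall s, 0 < exp (-2*al*(x s + y s))) by (intros; apply exp_pos).
  assert (E2p : forall s, 0 < exp (2*be*(x s - y s))) by (intros; apply exp_pos).
  assert (Hu0 : p s0 + q s0 <> 0).
  { intros E. pose proof (Huv s0 Hs0) as E'. rewrite E in E'. lra. }
  assert (Hv0 : p s0 - q s0 <> 0).
  { intros E. pose proof (Huv s0 Hs0) as E'. rewrite E in E'. lra. }
  assert (Hks0 := Hk s0 Hs0).
  assert (Huv0 := Huv s0 Hs0).
  assert (HA0 : al*((p s0+q s0)*(p s0+q s0)) + be = k s0 * (p s0 + q s0)) by nsatz.
  assert (HB0 : al + be*((p s0-q s0)*(p s0-q s0)) = k s0 * (p s0 - q s0)) by nsatz.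
  destruct (Req_dec al 0) as [Hal|Hal]; destruct (Req_dec be 0) as [Hbe|Hbe].
  -
    exfalso. apply Hk0. rewrite Hks0, Hal, Hbe. ring.
  - (* al = 0 : light-like, model M3 *)
    set (S0 := Sf s0). set (J := Uf s0).
    assert (HS0 : S0 = be*((p s0-q s0)*(p s0-q s0)) * exp (2*be*(x s0 - y s0))).
    { unfold S0, Sf. rewrite Hal. ring. }
    set (K := S0 / be).
    assert (HK : K = (p s0-q s0)*(p s0-q s0) * exp (2*be*(x s0 - y s0))).
    { unfold K. rewrite HS0. field. auto. }
    assert (HKp : 0 < K).
    { rewrite HK. apply Rmult_lt_0_compat; auto. pose proof (Rsqr_pos_lt _ Hv0). unfold Rsqr in *; lra. }
    exists (Fd (2*be*K) (2*be) (K*J) 0), M3. split.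
    + apply sim_diag. apply L_sq4; auto.
    + intros s Hs. cbv beta iota delta [model_set]. rewrite Fd_xi, Fd_eta. cbn [fst snd].
      rewrite Rplus_0_r.
      pose proof (HU Hal s Hs) as U1. pose proof (HS s Hs) as S1. pose proof (Huv s Hs) as W.
      fold S0 J in U1, S1. unfold Uf in U1. unfold Sf in S1. rewrite Hal in S1.
      assert (Hbk : be * K = S0) by (unfold K; field; auto).
      assert (be * (2*be*K*(x s + y s) + K*J - exp (2*be*(x s - y s))) = 0) by nsatz.
      apply Rmult_integral in H0. destruct H0 as [H0|H0]; [contradiction|lra].
  - (* be = 0 : light-like, model M3 *)
    set (P0 := Pf s0). set (J := Vf s0).
    assert (HP0 : P0 = al*((p s0+q s0)*(p s0+q s0)) * exp (-2*al*(x s0 + y s0))).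
    { unfold P0, Pf. rewrite Hbe. ring. }
    set (K := P0 / al).
    assert (HK : K = (p s0+q s0)*(p s0+q s0) * exp (-2*al*(x s0 + y s0))).
    { unfold K. rewrite HP0. field. auto. }
    assert (HKp : 0 < K).
    { rewrite HK. apply Rmult_lt_0_compat; auto. pose proof (Rsqr_pos_lt _ Hu0). unfold Rsqr in *; lra. }
    exists (Fa (-2*al*K) (-2*al) (K*J) 0), M3. split.
    + apply sim_anti. apply L_sq4'; auto.
    + intros s Hs. cbv beta iota delta [model_set]. rewrite Fa_xi, Fa_eta. cbn [fst snd].
      rewrite Rplus_0_r.
      pose proof (HV Hbe s Hs) as V1. pose proof (HP s Hs) as P1. pose proof (Huv s Hs) as W.
      fold P0 J in V1, P1. unfold Vf in V1. unfold Pf in P1. rewrite Hbe in P1.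
      assert (Hak : al * K = P0) by (unfold K; field; auto).
      assert (al * (-2*al*K*(x s - y s) + K*J - exp (-2*al*(x s + y s))) = 0) by nsatz.
      apply Rmult_integral in H0. destruct H0 as [H0|H0]; [contradiction|lra].
  -
    set (P0 := Pf s0). set (S0 := Sf s0).
    assert (HP0 : P0 = k s0 * (p s0 + q s0) * exp (-2*al*(x s0 + y s0))).
    { unfold P0, Pf. rewrite HA0. ring. }
    assert (HS0 : S0 = k s0 * (p s0 - q s0) * exp (2*be*(x s0 - y s0))).
    { unfold S0, Sf. rewrite HB0. ring. }
    assert (HPS : 0 < P0 * S0).
    { rewrite HP0, HS0.
      replace (k s0 * (p s0 + q s0) * exp (-2 * al * (x s0 + y s0)) *
               (k s0 * (p s0 - q s0) * exp (2 * be * (x s0 - y s0))))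
        with ((k s0 * k s0) * ((p s0 + q s0) * (p s0 - q s0)) *
              (exp (-2 * al * (x s0 + y s0)) * exp (2 * be * (x s0 - y s0)))) by ring.
      rewrite Huv0. pose proof (Rsqr_pos_lt _ Hk0). unfold Rsqr in *.
      apply Rmult_lt_0_compat; [lra|]. apply Rmult_lt_0_compat; auto. }
    assert (HP0n : P0 <> 0) by (intro E; rewrite E in HPS; lra).
    assert (HS0n : S0 <> 0) by (intro E; rewrite E in HPS; lra).
    set (c1 := al / S0). set (c2 := be / P0).
    assert (Hkey : forall s, in_ivl a b s ->
               c1 * exp (2*be*(x s - y s)) + c2 * exp (-2*al*(x s + y s)) = 1).
    { intros s Hs. pose proof (HP s Hs) as P1. pose proof (HS s Hs) as S1. pose proof (Huv s Hs) as W.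
      fold P0 in P1. fold S0 in S1. unfold Pf in P1. unfold Sf in S1.
      assert (al*P0*exp (2*be*(x s - y s)) + be*S0*exp (-2*al*(x s + y s)) = P0*S0) by nsatz.
      unfold c1, c2.
      transitivity ((al*P0*exp (2*be*(x s - y s)) + be*S0*exp (-2*al*(x s + y s)))/(P0*S0)).
      { field. auto. }
      rewrite H0. field. auto. }
    assert (Hc12 : c1*c2*(P0*S0) = al*be) by (unfold c1, c2; field; auto).
    pose proof (Hkey s0 Hs0) as K0.
    pose proof (E1p s0). pose proof (E2p s0).
    destruct (Rlt_or_le 0 (al*be)) as [Hab|Hab].
    + (* time-like : M1 *)
      assert (Hc : 0 < c1*c2) by (apply (L_pos _ _ _ Hc12); auto).
      destruct (L_both c1 c2 _ _ Hc K0) as [Hc1 Hc2]; auto.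
      exists (Fd (2*al) (2*be) (- ln (2*c2)) (ln (2*c1))), M1. split.
      * apply sim_diag. apply L_m1; auto.
      * intros s Hs. apply ms1. rewrite Fd_xi, Fd_eta. cbn [fst snd].
        replace (-(2*al*(x s + y s) + - ln (2*c2))) with (-2*al*(x s+y s) + ln (2*c2)) by ring.
        rewrite !exp_ln_add by lra. pose proof (Hkey s Hs). lra.
    + assert (Hab' : al*be < 0).
      { destruct Hab as [Hab|Hab]; auto. apply Rmult_integral in Hab. tauto. }
      assert (Hc : c1*c2 < 0) by (apply (L_neg _ _ _ Hc12); auto).
      destruct (Rlt_or_le 0 c1) as [Hc1|Hc1].
      * assert (Hc2 : c2 < 0) by (apply (L_opp1 c1); auto).
        exists (Fa (2*be) (-2*al) (ln (2*c1)) (ln (-2*c2))), M2. split.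
        -- apply sim_anti. apply L_m2; auto.
        -- intros s Hs. apply ms2. rewrite Fa_xi, Fa_eta. cbn [fst snd].
           rewrite !exp_ln_add by lra. pose proof (Hkey s Hs). lra.
      * assert (Hc1' : c1 < 0) by (destruct Hc1 as [Hc1|Hc1]; auto; rewrite Hc1 in Hc; lra).
        assert (Hc2 : 0 < c2) by (apply (L_opp2 c1); auto).
        exists (Fd (-2*al) (2*be) (ln (2*c2)) (ln (-2*c1))), M2. split.
        -- apply sim_diag. apply L_m3; auto.
        -- intros s Hs. apply ms2. rewrite Fd_xi, Fd_eta. cbn [fst snd].
           rewrite !exp_ln_add by lra. pose proof (Hkey s Hs). lra.
Qed.

Lemma curve_facts a b X k s : unit_speed_curve a b X -> has_curvature a b X k -> in_ivl a b s ->
  is_derive (fun u => fst (X u)) s (Derive (fun u => fst (X u)) s) /\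
  is_derive (fun u => snd (X u)) s (Derive (fun u => snd (X u)) s) /\
  is_derive (fun u => Derive (fun w => fst (X w)) u) s (k s * Derive (fun u => snd (X u)) s) /\
  is_derive (fun u => Derive (fun w => snd (X w)) u) s (k s * Derive (fun u => fst (X u)) s) /\
  Derive (fun u => fst (X u)) s * Derive (fun u => fst (X u)) s -
  Derive (fun u => snd (X u)) s * Derive (fun u => snd (X u)) s = 1.
Proof.
  intros HU HC Hs.
  destruct (HU s Hs) as (H1&H2&H3&H4&H5).
  pose proof (HC s Hs) as HK. unfold tangent', normal, hmul, tangent in HK. simpl in HK.
  injection HK as K1 K2.
  split; [apply Derive_correct; auto|].
  split; [apply Derive_correct; auto|].
  split. { rewrite <- K1. apply Derive_correct. exact H3. }
  split. { rewrite <- K2. apply Derive_correct. exact H4. }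
  unfold mink, tangent in H5. simpl in H5. exact H5.
Qed.

Lemma part2 (a b : Rbar) (X : R -> pt) (k : R -> R) (C : pt) :
      Rbar_lt a b ->
      unit_speed_curve a b X ->
      has_curvature a b X k ->
      translator a b X C k ->
      (exists s0, in_ivl a b s0 /\ k s0 <> 0) ->
      exists (F : pt -> pt) (m : model),
        similarity F /\ forall s, in_ivl a b s -> model_set m (F (X s)).
Proof.
  intros _ HU HC HT [s0 [Hs0 Hk0]].
  destruct (classify a b (fun u => fst (X u)) (fun u => snd (X u))
     (fun u => Derive (fun w => fst (X w)) u) (fun u => Derive (fun w => snd (X w)) u) k
     (fst C) (snd C) s0) as [F [m [HF Hm]]]; auto.
  - intros s Hs. destruct (curve_facts a b X k s HU HC Hs) as (H1&H2&H3&H4&H5).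
    repeat (split; auto).
    pose proof (HT s Hs) as E. unfold mink, normal, hmul, tangent in E. simpl in E. lra.
  - exists F, m. split; auto. intros s Hs. specialize (Hm s Hs).
    destruct (X s); exact Hm.
Qed.

Lemma build (a b : Rbar) (X : R -> pt) (p q p' q' : R -> R) :
 (forall s, in_ivl a b s -> is_derive (fun u => fst (X u)) s (p s) /\
    is_derive (fun u => snd (X u)) s (q s) /\ is_derive p s (p' s) /\ is_derive q s (q' s)) ->
 forall s, in_ivl a b s -> tangent X s = (p s, q s) /\ tangent' X s = (p' s, q' s) /\
   ex_derive (fun u => fst (X u)) s /\ ex_derive (fun u => snd (X u)) s /\
   ex_derive (fun u => fst (tangent X u)) s /\ ex_derive (fun u => snd (tangent X u)) s.
Proof.
  intros H s Hs.
  assert (T : forall u, in_ivl a b u -> tangent X u = (p u, q u)).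
  { intros u Hu. destruct (H u Hu) as (H1&H2&_&_). unfold tangent.
    f_equal; apply is_derive_unique; auto. }
  destruct (H s Hs) as (H1&H2&H3&H4).
  assert (D1 : is_derive (fun u => fst (tangent X u)) s (p' s)).
  { apply (is_derive_ext_loc p); auto.
    generalize (ivl_locally a b s Hs). apply filter_imp. intros u Hu. rewrite T; auto. }
  assert (D2 : is_derive (fun u => snd (tangent X u)) s (q' s)).
  { apply (is_derive_ext_loc q); auto.
    generalize (ivl_locally a b s Hs). apply filter_imp. intros u Hu. rewrite T; auto. }
  split; [apply T; auto|]. split.
  { unfold tangent'. f_equal; apply is_derive_unique; auto. }
  repeat split; eexists; eauto.
Qed.

Lemma model_props (a b : Rbar) (X : R -> pt) (p q p' q' k : R -> R) (C : pt) :
 (forall s, in_ivl a b s -> is_derive (fun u => fst (X u)) s (p s) /\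
    is_derive (fun u => snd (X u)) s (q s) /\ is_derive p s (p' s) /\ is_derive q s (q' s)) ->
 (forall s, in_ivl a b s -> p s * p s - q s * q s = 1 /\ p' s = k s * q s /\ q' s = k s * p s /\
    - (fst C * q s - snd C * p s) = k s) ->
 unit_speed_curve a b X /\ has_curvature a b X k /\ translator a b X C k.
Proof.
  intros H1 H2. split; [|split]; intros s Hs;
  destruct (build a b X p q p' q' H1 s Hs) as (T&T'&E1&E2&E3&E4);
  destruct (H2 s Hs) as (K1&K2&K3&K4).
  - repeat split; auto. unfold mink. rewrite T. simpl. auto.
  - rewrite T'. unfold normal, hmul. rewrite T. simpl. rewrite K2, K3. auto.
  - unfold normal, hmul, mink. rewrite T. simpl. auto.
Qed.

Lemma m1_props : unit_speed_curve (dom_lo M1) (dom_hi M1) (gamma M1) /\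
  has_curvature (dom_lo M1) (dom_hi M1) (gamma M1) (model_curv M1) /\
  translator (dom_lo M1) (dom_hi M1) (gamma M1) (model_vel M1) (model_curv M1).
Proof.
  apply (model_props _ _ _ (fun s => 1 / cos s) (fun s => sin s / cos s)
     (fun s => sin s / (cos s * cos s)) (fun s => 1 / (cos s * cos s))).
  - intros s [Hs1 Hs2]. simpl in Hs1, Hs2.
    assert (Hc : 0 < cos s) by (apply cos_gt_0; lra).
    assert (Hsc : sin s * sin s + cos s * cos s = 1) by (rewrite <- (sin2_cos2 s); unfold Rsqr; ring).
    assert (Hs : 0 < 1 + sin s) by nra.
    cbn [gamma fst snd]. split; [|split; [|split]].
    + auto_derive. repeat split; try lra. apply Rdiv_lt_0_compat; lra.
      field_simplify_eq. lra. split; lra.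
    + auto_derive. repeat split; try lra. field. lra.
    + auto_derive. repeat split; try lra. field. lra.
    + auto_derive. repeat split; try lra. field_simplify_eq. lra. lra.
  - intros s [Hs1 Hs2]. simpl in Hs1, Hs2.
    assert (Hc : 0 < cos s) by (apply cos_gt_0; lra).
    assert (Hsc : sin s * sin s + cos s * cos s = 1) by (rewrite <- (sin2_cos2 s); unfold Rsqr; ring).
    simpl. repeat split.
    + field_simplify_eq. lra. lra.
    + field. lra.
    + field. lra.
    + field. lra.
Qed.

Lemma m2_props : unit_speed_curve (dom_lo M2) (dom_hi M2) (gamma M2) /\
  has_curvature (dom_lo M2) (dom_hi M2) (gamma M2) (model_curv M2) /\
  translator (dom_lo M2) (dom_hi M2) (gamma M2) (model_vel M2) (model_curv M2).
Proof.
  apply (model_props _ _ _ (fun s => (exp s + exp (-s)) / (exp s - exp (-s)))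
     (fun s => -2 / (exp s - exp (-s)))
     (fun s => -4 / ((exp s - exp (-s)) * (exp s - exp (-s))))
     (fun s => 2 * (exp s + exp (-s)) / ((exp s - exp (-s)) * (exp s - exp (-s))))).
  - intros s [Hs1 _]. simpl in Hs1.
    assert (He : 1 < exp s) by (rewrite <- exp_0; apply exp_increasing; lra).
    assert (Hei : exp s * exp (-s) = 1) by (rewrite <- exp_plus, Rplus_opp_r; apply exp_0).
    assert (Hie : 0 < exp (-s)) by apply exp_pos.
    assert (Hd : 0 < exp s - exp (-s)) by nra.
    cbn [gamma fst snd]. unfold sinh. split; [|split; [|split]].
    + auto_derive. repeat split; try lra. field_simplify_eq. lra. lra.
    + auto_derive. repeat split; try lra. apply Rdiv_lt_0_compat; lra.
      field_simplify_eq. nra. repeat split; lra.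
    + auto_derive. repeat split; try lra. field_simplify_eq. nra. lra.
    + auto_derive. repeat split; try lra. field_simplify_eq. nra. lra.
  - intros s [Hs1 _]. simpl in Hs1.
    assert (He : 1 < exp s) by (rewrite <- exp_0; apply exp_increasing; lra).
    assert (Hei : exp s * exp (-s) = 1) by (rewrite <- exp_plus, Rplus_opp_r; apply exp_0).
    assert (Hie : 0 < exp (-s)) by apply exp_pos.
    assert (Hd : 0 < exp s - exp (-s)) by nra.
    simpl. unfold sinh. repeat split.
    + field_simplify_eq. nra. lra.
    + field. lra.
    + field. lra.
    + field. lra.
Qed.

Lemma m3_props : unit_speed_curve (dom_lo M3) (dom_hi M3) (gamma M3) /\
  has_curvature (dom_lo M3) (dom_hi M3) (gamma M3) (model_curv M3) /\
  translator (dom_lo M3) (dom_hi M3) (gamma M3) (model_vel M3) (model_curv M3).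
Proof.
  apply (model_props _ _ _ (fun s => s/4 + 1/s) (fun s => s/4 - 1/s)
     (fun s => 1/4 - 1/(s*s)) (fun s => 1/4 + 1/(s*s))).
  - intros s [Hs1 _]. simpl in Hs1.
    cbn [gamma fst snd]. split; [|split; [|split]].
    + auto_derive. repeat split; try lra. field. lra.
    + auto_derive. repeat split; try lra. field. lra.
    + auto_derive. repeat split; try lra. field. lra.
    + auto_derive. repeat split; try lra. field. lra.
  - intros s [Hs1 _]. simpl in Hs1.
    simpl. repeat split; field; lra.
Qed.

Lemma exp_inv_l x : exp x * exp (-x) = 1.
Proof. rewrite <- exp_plus, Rplus_opp_r; apply exp_0. Qed.

Lemma m1_set p : model_set M1 p <-> exists s, in_ivl (dom_lo M1) (dom_hi M1) s /\ gamma M1 s = p.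
Proof.
  destruct p as [X Y]. simpl. split.
  - intros H. exists (atan (sinh X)).
    assert (Hi := exp_inv_l X). assert (P1 := exp_pos X). assert (P2 := exp_pos (-X)).
    assert (Hch : 0 < cosh X) by (unfold cosh; lra).
    assert (Hsq : sqrt (1 + (sinh X)²) = cosh X).
    { rewrite <- (sqrt_square (cosh X)) by lra. f_equal. unfold Rsqr, sinh, cosh. nra. }
    assert (Hc : cos (atan (sinh X)) = / cosh X) by (rewrite cos_atan, Hsq; field; lra).
    assert (Hs : sin (atan (sinh X)) = sinh X / cosh X) by (rewrite sin_atan, Hsq; auto).
    split.
    + pose proof (atan_bound (sinh X)). unfold in_ivl; simpl. lra.
    + rewrite Hc, Hs. f_equal.
      * replace ((1 + sinh X / cosh X) / / cosh X) with (exp X).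
        { apply ln_exp. }
        unfold sinh, cosh. field. lra.
      * rewrite ln_Rinv by lra. rewrite H, ln_exp. ring.
  - intros [s [[Hs1 Hs2] Hg]]. simpl in Hs1, Hs2. injection Hg as <- <-.
    assert (Hc : 0 < cos s) by (apply cos_gt_0; lra).
    assert (Hsc : sin s * sin s + cos s * cos s = 1) by (rewrite <- (sin2_cos2 s); unfold Rsqr; ring).
    assert (Hsn : 0 < 1 + sin s) by nra.
    unfold cosh. rewrite exp_Ropp, exp_ln by (apply Rdiv_lt_0_compat; lra).
    rewrite exp_Ropp, exp_ln by lra.
    field_simplify_eq. lra. repeat split; lra.
Qed.

Lemma m2_set p : model_set M2 p <-> exists s, in_ivl (dom_lo M2) (dom_hi M2) s /\ gamma M2 s = p.
Proof.
  destruct p as [X Y]. simpl. split.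
  - intros H.
    assert (HY : 0 < Y).
    { destruct (Rlt_or_le 0 Y) as [h|h]; auto. exfalso.
      pose proof (exp_pos (-X)). unfold sinh in H.
      assert (exp Y <= exp (-Y)).
      { destruct (Req_dec Y 0) as [->|h']. rewrite Ropp_0; lra.
        left; apply exp_increasing; lra. }
      lra. }
    set (E := exp Y).
    assert (HE : 1 < E) by (unfold E; rewrite <- exp_0; apply exp_increasing; lra).
    assert (HiE : exp (-Y) = / E) by (unfold E; apply exp_Ropp).
    assert (Hw : 0 < (E + 1) / (E - 1)) by (apply Rdiv_lt_0_compat; lra).
    exists (ln ((E + 1) / (E - 1))). split.
    + unfold in_ivl; simpl. split; auto. rewrite <- ln_1. apply ln_increasing. lra.
      apply (Rmult_lt_reg_r (E - 1)). lra.
      replace ((E + 1) / (E - 1) * (E - 1)) with (E + 1) by (field; lra). lra.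
    + rewrite exp_ln by auto. f_equal.
      * unfold sinh. rewrite exp_Ropp, exp_ln by auto.
        replace (((E + 1) / (E - 1) - / ((E + 1) / (E - 1))) / 2) with (/ sinh Y).
        2:{ unfold sinh. rewrite HiE. fold E. field. repeat split; try lra. nra. }
        rewrite H, <- exp_Ropp, Ropp_involutive. apply ln_exp.
      * replace (((E + 1) / (E - 1) + 1) / ((E + 1) / (E - 1) - 1)) with E.
        { apply ln_exp. }
        field. repeat split; lra.
  - intros [s [[Hs1 _] Hg]]. simpl in Hs1. injection Hg as <- <-.
    assert (He : 1 < exp s) by (rewrite <- exp_0; apply exp_increasing; lra).
    assert (Hei : exp (-s) = / exp s) by apply exp_Ropp.
    assert (Hw : 0 < (exp s + 1) / (exp s - 1)) by (apply Rdiv_lt_0_compat; lra).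
    assert (Hsh : 0 < sinh s).
    { unfold sinh. rewrite Hei. apply Rdiv_lt_0_compat; [|lra].
      assert (/ exp s < 1). { rewrite <- Rinv_1. apply Rinv_lt_contravar; lra. } lra. }
    unfold sinh at 1. rewrite exp_Ropp, exp_ln by auto.
    rewrite exp_Ropp, exp_ln by auto.
    unfold sinh. rewrite Hei. field. repeat split; try lra.
    assert (exp s * exp s - 1 > 0) by nra. lra.
Qed.

Lemma m3_set p : model_set M3 p <-> exists s, in_ivl (dom_lo M3) (dom_hi M3) s /\ gamma M3 s = p.
Proof.
  destruct p as [X Y]. simpl. split.
  - intros H. exists (2 * exp ((X - Y)/2)).
    assert (P := exp_pos ((X-Y)/2)).
    assert (Hsq : exp ((X-Y)/2) * exp ((X-Y)/2) = exp (X - Y)) by (rewrite <- exp_plus; f_equal; field).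
    split.
    + unfold in_ivl; simpl. split; auto. lra.
    + replace (2 * exp ((X - Y) / 2) / 2) with (exp ((X - Y)/2)) by field.
      rewrite ln_exp. rewrite <- H in Hsq. f_equal; lra.
  - intros [s [[Hs1 _] Hg]]. simpl in Hs1. injection Hg as <- <-.
    replace (s * (s * 1) / 8 + ln (s / 2) - (s * (s * 1) / 8 - ln (s / 2))) with (ln (s/2) + ln (s/2)) by ring.
    rewrite exp_plus, exp_ln by lra. field.
Qed.

Lemma D_opp (f : R -> R) (x df : R) : is_derive f x df -> is_derive (fun t => - f t) x (- df).
Proof. intros H. apply (is_derive_opp f x df); auto. Qed.

Ltac dstep2 := lazymatch goal with
 | |- is_derive (fun _ => ?c) _ _ => apply D_const
 | |- is_derive (fun t => _ * _) _ _ => apply D_mul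
 | |- is_derive (fun t => _ + _) _ _ => apply D_plus
 | |- is_derive (fun t => _ - _) _ _ => apply D_minus
 | |- is_derive (fun t => - _) _ _ => apply D_opp
 | |- is_derive (fun t => exp _) _ _ => apply D_exp
 | _ => eassumption end.
Ltac dtac2 := repeat dstep2.

Lemma impl1 (a b : Rbar) (Y1 Y2 P Q K : R -> R)
  (H : forall s, in_ivl a b s -> is_derive Y1 s (P s) /\ is_derive Y2 s (Q s) /\
   is_derive P s (K s * Q s) /\ is_derive Q s (K s * P s) /\ 0 < P s * P s - Q s * Q s) :
  (forall s, in_ivl a b s -> model_set M1 (Y1 s, Y2 s)) ->
  forall s, in_ivl a b s -> K s = P s.
Proof.
  intros Hm.
  assert (G1 : forall s, in_ivl a b s -> exp (Y1 s) + exp (- Y1 s) - 2 * exp (Y2 s) = 0).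
  { intros s Hs. specialize (Hm s Hs). simpl in Hm. unfold cosh in Hm. lra. }
  assert (G2 : forall s, in_ivl a b s ->
     Q s * (exp (Y1 s) + exp (- Y1 s)) - P s * (exp (Y1 s) - exp (- Y1 s)) = 0).
  { intros s Hs. destruct (H s Hs) as (H1&H2&H3&H4&H5).
    assert (D1 : is_derive (fun t => exp (Y1 t) + exp (- Y1 t) - 2 * exp (Y2 t)) s
       (P s * exp (Y1 s) + (- P s) * exp (- Y1 s) - (0 * exp (Y2 s) + 2 * (Q s * exp (Y2 s))))).
    { eapply D_eq. dtac2. cbv beta. ring. }
    apply (deriv_zero_loc a b) in D1; auto. pose proof (G1 s Hs). nsatz. }
  intros s Hs. destruct (H s Hs) as (H1&H2&H3&H4&H5).
  assert (D2 : is_derive (fun t => Q t * (exp (Y1 t) + exp (- Y1 t)) - P t * (exp (Y1 t) - exp (- Y1 t))) s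
     ((K s * P s) * (exp (Y1 s) + exp (- Y1 s)) + Q s * (P s * exp (Y1 s) + (- P s) * exp (- Y1 s))
      - ((K s * Q s) * (exp (Y1 s) - exp (- Y1 s)) + P s * (P s * exp (Y1 s) - (- P s) * exp (- Y1 s))))).
  { eapply D_eq. dtac2. cbv beta. ring. }
  apply (deriv_zero_loc a b) in D2; auto.
  pose proof (G2 s Hs) as E2.
  assert (Hab : exp (Y1 s) * exp (- Y1 s) = 1) by (rewrite <- exp_plus, Rplus_opp_r; apply exp_0).
  assert (Z : P s * (K s - P s) = 0) by nsatz.
  apply Rmult_integral in Z. destruct Z as [Z|Z].
  - rewrite Z in H5. nra.
  - lra.
Qed.

Lemma impl2 (a b : Rbar) (Y1 Y2 P Q K : R -> R)
  (H : forall s, in_ivl a b s -> is_derive Y1 s (P s) /\ is_derive Y2 s (Q s) /\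
   is_derive P s (K s * Q s) /\ is_derive Q s (K s * P s) /\ 0 < P s * P s - Q s * Q s) :
  (forall s, in_ivl a b s -> model_set M2 (Y1 s, Y2 s)) ->
  forall s, in_ivl a b s -> K s = - Q s.
Proof.
  intros Hm.
  assert (G1 : forall s, in_ivl a b s -> exp (Y2 s) - exp (- Y2 s) - 2 * exp (- Y1 s) = 0).
  { intros s Hs. specialize (Hm s Hs). simpl in Hm. unfold sinh in Hm. lra. }
  assert (G2 : forall s, in_ivl a b s ->
     (exp (Y2 s) + exp (- Y2 s)) * Q s + (exp (Y2 s) - exp (- Y2 s)) * P s = 0).
  { intros s Hs. destruct (H s Hs) as (H1&H2&H3&H4&H5).
    assert (D1 : is_derive (fun t => exp (Y2 t) - exp (- Y2 t) - 2 * exp (- Y1 t)) s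
       (Q s * exp (Y2 s) - (- Q s) * exp (- Y2 s) - 2 * ((- P s) * exp (- Y1 s)))).
    { eapply D_eq. dtac2. cbv beta. ring. }
    apply (deriv_zero_loc a b) in D1; auto. pose proof (G1 s Hs). nsatz. }
  intros s Hs. destruct (H s Hs) as (H1&H2&H3&H4&H5).
  assert (D2 : is_derive (fun t => (exp (Y2 t) + exp (- Y2 t)) * Q t + (exp (Y2 t) - exp (- Y2 t)) * P t) s
     ((Q s * exp (Y2 s) + (- Q s) * exp (- Y2 s)) * Q s + (exp (Y2 s) + exp (- Y2 s)) * (K s * P s)
      + ((Q s * exp (Y2 s) - (- Q s) * exp (- Y2 s)) * P s + (exp (Y2 s) - exp (- Y2 s)) * (K s * Q s)))).
  { eapply D_eq. dtac2. cbv beta. ring. }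
  apply (deriv_zero_loc a b) in D2; auto.
  pose proof (G2 s Hs) as E2.
  assert (Hab : exp (Y2 s) * exp (- Y2 s) = 1) by (rewrite <- exp_plus, Rplus_opp_r; apply exp_0).
  assert (Z : P s * (K s + Q s) = 0) by nsatz.
  apply Rmult_integral in Z. destruct Z as [Z|Z].
  - rewrite Z in H5. nra.
  - lra.
Qed.

Lemma impl3 (a b : Rbar) (Y1 Y2 P Q K : R -> R)
  (H : forall s, in_ivl a b s -> is_derive Y1 s (P s) /\ is_derive Y2 s (Q s) /\
   is_derive P s (K s * Q s) /\ is_derive Q s (K s * P s) /\ 0 < P s * P s - Q s * Q s) :
  (forall s, in_ivl a b s -> model_set M3 (Y1 s, Y2 s)) ->
  forall s, in_ivl a b s -> 2 * K s = P s - Q s.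
Proof.
  intros Hm.
  assert (G1 : forall s, in_ivl a b s -> Y1 s + Y2 s - exp (Y1 s - Y2 s) = 0).
  { intros s Hs. specialize (Hm s Hs). simpl in Hm. lra. }
  assert (G2 : forall s, in_ivl a b s -> P s + Q s - (P s - Q s) * exp (Y1 s - Y2 s) = 0).
  { intros s Hs. destruct (H s Hs) as (H1&H2&H3&H4&H5).
    assert (D1 : is_derive (fun t => Y1 t + Y2 t - exp (Y1 t - Y2 t)) s
       (P s + Q s - (P s - Q s) * exp (Y1 s - Y2 s))).
    { eapply D_eq. dtac2. cbv beta. ring. }
    apply (deriv_zero_loc a b) in D1; auto. }
  intros s Hs. destruct (H s Hs) as (H1&H2&H3&H4&H5).
  assert (D2 : is_derive (fun t => P t + Q t - (P t - Q t) * exp (Y1 t - Y2 t)) s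
     (K s * Q s + K s * P s - ((K s * Q s - K s * P s) * exp (Y1 s - Y2 s)
        + (P s - Q s) * ((P s - Q s) * exp (Y1 s - Y2 s))))).
  { eapply D_eq. dtac2. cbv beta. ring. }
  apply (deriv_zero_loc a b) in D2; auto.
  pose proof (G2 s Hs) as E2.
  assert (He : 0 < exp (Y1 s - Y2 s)) by apply exp_pos.
  assert (Z : exp (Y1 s - Y2 s) * ((P s - Q s) * (2 * K s - (P s - Q s))) = 0).
  { clear - D2 E2. revert D2 E2. generalize (exp (Y1 s - Y2 s)) (K s) (P s) (Q s).
    intros e k0 p0 q0 D2 E2. nsatz. }
  apply Rmult_integral in Z. destruct Z as [Z|Z]; [lra|].
  apply Rmult_integral in Z. destruct Z as [Z|Z]; [|lra].
  assert (E : P s = Q s) by lra. rewrite E in H5. lra.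
Qed.


Lemma lorentz_struct (a11 a12 a21 a22 : R) :
  (forall p q : pt, mink (a11 * fst p + a12 * snd p, a21 * fst p + a22 * snd p)
                         (a11 * fst q + a12 * snd q, a21 * fst q + a22 * snd q) = mink p q) ->
  exists e, e * e = 1 /\ a22 = e * a11 /\ a12 = e * a21 /\ a11 * a11 - a21 * a21 = 1.
Proof.
  intros H.
  pose proof (H (1,0) (1,0)) as H1. pose proof (H (0,1) (0,1)) as H2. pose proof (H (1,0) (0,1)) as H3.
  unfold mink in H1, H2, H3. simpl in H1, H2, H3.
  assert (E1 : a11 * a11 - a21 * a21 = 1) by lra.
  assert (E2 : a12 * a12 - a22 * a22 = -1) by lra.
  assert (E3 : a11 * a12 - a21 * a22 = 0) by lra.
  assert (E4 : (a22 - a11) * (a22 + a11) = 0) by nsatz.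
  assert (HA : a11 <> 0) by (intro Z; rewrite Z in E1; nra).
  apply Rmult_integral in E4. destruct E4 as [E4|E4].
  - exists 1. assert (a22 = a11) by lra. subst.
    assert (a11 * (a12 - a21) = 0) by nsatz.
    apply Rmult_integral in H0. destruct H0; [contradiction|].
    repeat split; auto; lra.
  - exists (-1). assert (a22 = - a11) by lra. subst.
    assert (a11 * (a12 + a21) = 0) by nsatz.
    apply Rmult_integral in H0. destruct H0; [contradiction|].
    repeat split; auto; lra.
Qed.

Lemma wlemma (a b : Rbar) (p q k : R -> R) (w1 w2 s0 : R) :
  (forall s, in_ivl a b s -> is_derive p s (k s * q s) /\ is_derive q s (k s * p s) /\
     p s * p s - q s * q s = 1 /\ k s <> 0 /\ w1 * p s + w2 * q s = 0) ->
  in_ivl a b s0 -> w1 = 0 /\ w2 = 0.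
Proof.
  intros H Hs0. destruct (H s0 Hs0) as (H1&H2&H3&H4&H5).
  assert (D : is_derive (fun t => w1 * p t + w2 * q t) s0 (w1 * (k s0 * q s0) + w2 * (k s0 * p s0))).
  { eapply D_eq. dtac2. cbv beta. ring. }
  apply (deriv_zero_loc a b) in D; auto.
  2:{ intros t Ht. destruct (H t Ht) as (_&_&_&_&E). exact E. }
  assert (E : k s0 * (w1 * q s0 + w2 * p s0) = 0) by (rewrite <- D; ring).
  apply Rmult_integral in E. destruct E as [E|E]; [contradiction|].
  split; nsatz.
Qed.

Lemma model_info (m : model) : forall s, in_ivl (dom_lo m) (dom_hi m) s ->
  is_derive (fun u => fst (gamma m u)) s (Derive (fun u => fst (gamma m u)) s) /\
  is_derive (fun u => snd (gamma m u)) s (Derive (fun u => snd (gamma m u)) s) /\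
  is_derive (fun u => Derive (fun w => fst (gamma m w)) u) s (model_curv m s * Derive (fun u => snd (gamma m u)) s) /\
  is_derive (fun u => Derive (fun w => snd (gamma m w)) u) s (model_curv m s * Derive (fun u => fst (gamma m u)) s) /\
  Derive (fun u => fst (gamma m u)) s * Derive (fun u => fst (gamma m u)) s -
  Derive (fun u => snd (gamma m u)) s * Derive (fun u => snd (gamma m u)) s = 1 /\
  snd (model_vel m) * Derive (fun u => fst (gamma m u)) s - fst (model_vel m) * Derive (fun u => snd (gamma m u)) s = model_curv m s /\
  model_curv m s <> 0.
Proof.
  intros s Hs.
  assert (HP : unit_speed_curve (dom_lo m) (dom_hi m) (gamma m) /\
     has_curvature (dom_lo m) (dom_hi m) (gamma m) (model_curv m) /\
     translator (dom_lo m) (dom_hi m) (gamma m) (model_vel m) (model_curv m)).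
  { destruct m; [apply m1_props|apply m2_props|apply m3_props]. }
  destruct HP as (HU&HC&HT).
  destruct (curve_facts _ _ _ _ s HU HC Hs) as (H1&H2&H3&H4&H5).
  repeat (split; auto).
  - pose proof (HT s Hs) as E. unfold mink, normal, hmul, tangent in E. simpl in E. lra.
  - destruct Hs as [Hs1 Hs2]. destruct m; simpl in *; unfold Rdiv; rewrite Rmult_1_l; apply Rinv_neq_0_compat.
    + pose proof (cos_gt_0 s Hs1 Hs2). lra.
    + unfold sinh. assert (exp (-s) < exp s) by (apply exp_increasing; lra). lra.
    + lra.
Qed.

Lemma v1 C1 C2 e lam A Cc : e*e = 1 -> A*A - Cc*Cc = 1 -> C2 - e*lam*A = 0 -> -C1 - lam*Cc = 0 ->
  C1*C1 - C2*C2 = -(lam*lam).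
Proof. intros. nsatz. Qed.
Lemma v2 C1 C2 e lam A Cc : e*e = 1 -> A*A - Cc*Cc = 1 -> C2 + e*lam*Cc = 0 -> -C1 + lam*A = 0 ->
  C1*C1 - C2*C2 = lam*lam.
Proof. intros. nsatz. Qed.
Lemma v3 C1 C2 e lam A Cc : e*e = 1 -> 2 * C2 - e*lam*(A-Cc) = 0 -> -2 * C1 + lam*(A-Cc) = 0 ->
  C1*C1 - C2*C2 = 0.
Proof. intros. assert (4 * (C1*C1 - C2*C2) = 0) by nsatz. lra. Qed.

Lemma part3 (m m' : model) (F : pt -> pt) (c d : R) :
      m <> m' -> similarity F -> c < d ->
      (forall s, c < s < d -> in_ivl (dom_lo m) (dom_hi m) s) ->
      ~ (forall s, c < s < d -> model_set m' (F (gamma m s))).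
Proof.
  intros Hmm' [lam [A [B [Cc [Dd [b1 [b2 HF]]]]]]] Hcd Hdom Hall.
  cbv zeta in HF. destruct HF as (Hlam & Hiso & HFe).
  destruct (lorentz_struct A B Cc Dd Hiso) as [e (He & HD & HB & HAC)].
  set (x := fun u => fst (gamma m u)). set (y := fun u => snd (gamma m u)).
  set (p := fun u => Derive x u). set (q := fun u => Derive y u).
  set (k := model_curv m).
  set (C1 := fst (model_vel m)). set (C2 := snd (model_vel m)).
  set (Y1 := fun u => lam * (A * x u + B * y u) + b1).
  set (Y2 := fun u => lam * (Cc * x u + Dd * y u) + b2).
  set (P := fun u => lam * (A * p u + B * q u)).
  set (Q := fun u => lam * (Cc * p u + Dd * q u)).
  set (K := fun u => e * k u).
  assert (Hiv : forall s, in_ivl (Finite c) (Finite d) s -> c < s < d).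
  { intros s [h1 h2]; simpl in *; lra. }
  assert (Info : forall s, in_ivl (Finite c) (Finite d) s ->
     is_derive x s (p s) /\ is_derive y s (q s) /\ is_derive p s (k s * q s) /\
     is_derive q s (k s * p s) /\ p s * p s - q s * q s = 1 /\ C2 * p s - C1 * q s = k s /\ k s <> 0).
  { intros s Hs. exact (model_info m s (Hdom s (Hiv s Hs))). }
  assert (HI : forall s, in_ivl (Finite c) (Finite d) s ->
     is_derive Y1 s (P s) /\ is_derive Y2 s (Q s) /\
     is_derive P s (K s * Q s) /\ is_derive Q s (K s * P s) /\ 0 < P s * P s - Q s * Q s).
  { intros s Hs. destruct (Info s Hs) as (H1&H2&H3&H4&H5&_).
    split; [|split; [|split; [|split]]].
    - unfold Y1, P. eapply D_eq. dtac2. cbv beta. ring.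
    - unfold Y2, Q. eapply D_eq. dtac2. cbv beta. ring.
    - unfold P, Q, K. eapply D_eq. dtac2. cbv beta. rewrite HB, HD. revert He. generalize (p s) (q s) (k s). clear. intros. nsatz.
    - unfold P, Q, K. eapply D_eq. dtac2. cbv beta. rewrite HB, HD. revert He. generalize (p s) (q s) (k s). clear. intros. nsatz.
    - unfold P, Q. rewrite HB, HD.
      assert (Z : (lam * (A * p s + e * Cc * q s)) * (lam * (A * p s + e * Cc * q s)) -
                  (lam * (Cc * p s + e * A * q s)) * (lam * (Cc * p s + e * A * q s)) = lam * lam)
        by (revert He H5 HAC; generalize (p s) (q s); clear; intros; nsatz).
      rewrite Z. nra. }
  assert (HM : forall s, in_ivl (Finite c) (Finite d) s -> model_set m' (Y1 s, Y2 s)).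
  { intros s Hs. pose proof (Hall s (Hiv s Hs)) as Z. rewrite HFe in Z. exact Z. }
  assert (Hs0 : in_ivl (Finite c) (Finite d) ((c + d) / 2)) by (split; simpl; lra).
  assert (HC : forall w1 w2, (forall s, in_ivl (Finite c) (Finite d) s -> w1 * p s + w2 * q s = 0) ->
             w1 = 0 /\ w2 = 0).
  { intros w1 w2 Hw. apply (wlemma (Finite c) (Finite d) p q k w1 w2 ((c+d)/2)); auto.
    intros s Hs. destruct (Info s Hs) as (H1&H2&H3&H4&H5&H6&H7). split; [auto|split; [auto|split; [auto|split; auto]]]. }
  assert (Hl2 : 0 < lam * lam) by nra.
  destruct m'.
  -
    pose proof (impl1 _ _ _ _ _ _ _ HI HM) as Hk.
    destruct (HC (C2 - e * lam * A) (- C1 - lam * Cc)) as [W1 W2].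
    { intros s Hs. pose proof (Hk s Hs) as Z. destruct (Info s Hs) as (_&_&_&_&_&H6&_).
      unfold K, P in Z. rewrite HB in Z. revert Z H6 He. generalize (p s) (q s) (k s). clear. intros. nsatz. }
    assert (Hv : C1 * C1 - C2 * C2 = - (lam * lam)).
    { apply (v1 C1 C2 e lam A Cc); auto. }
    unfold C1, C2 in Hv. destruct m; simpl in Hv; [congruence|lra|lra].
  -
    pose proof (impl2 _ _ _ _ _ _ _ HI HM) as Hk.
    destruct (HC (C2 + e * lam * Cc) (- C1 + lam * A)) as [W1 W2].
    { intros s Hs. pose proof (Hk s Hs) as Z. destruct (Info s Hs) as (_&_&_&_&_&H6&_).
      unfold K, Q in Z. rewrite HD in Z. revert Z H6 He. generalize (p s) (q s) (k s). clear. intros. nsatz. }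
    assert (Hv : C1 * C1 - C2 * C2 = lam * lam).
    { apply (v2 C1 C2 e lam A Cc); auto. }
    unfold C1, C2 in Hv. destruct m; simpl in Hv; [lra|congruence|lra].
  -
    pose proof (impl3 _ _ _ _ _ _ _ HI HM) as Hk.
    destruct (HC (2 * C2 - e * lam * (A - Cc)) (- 2 * C1 + lam * (A - Cc))) as [W1 W2].
    { intros s Hs. pose proof (Hk s Hs) as Z. destruct (Info s Hs) as (_&_&_&_&_&H6&_).
      unfold K, P, Q in Z. rewrite HB, HD in Z. revert Z H6 He. generalize (p s) (q s) (k s). clear. intros. nsatz. }
    assert (Hv : C1 * C1 - C2 * C2 = 0).
    { apply (v3 C1 C2 e lam A Cc); auto. }
    unfold C1, C2 in Hv. destruct m; simpl in Hv; [lra|lra|congruence].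
Qed.

Theorem theorem5p1 :
  (* the three curves are space-like translators with the stated curvature and velocity *)
  (forall m : model,
      unit_speed_curve (dom_lo m) (dom_hi m) (gamma m) /\
      has_curvature (dom_lo m) (dom_hi m) (gamma m) (model_curv m) /\
      translator (dom_lo m) (dom_hi m) (gamma m) (model_vel m) (model_curv m) /\
      (forall p, model_set m p <->
                 exists s, in_ivl (dom_lo m) (dom_hi m) s /\ gamma m s = p)) /\
  (* every (non-straight) space-like translator is one of them up to similarity *)
  (forall (a b : Rbar) (X : R -> pt) (k : R -> R) (C : pt),
      Rbar_lt a b ->
      unit_speed_curve a b X ->
      has_curvature a b X k ->
      translator a b X C k ->
      (exists s0, in_ivl a b s0 /\ k s0 <> 0) ->
      exists (F : pt -> pt) (m : model),
        similarity F /\ forall s, in_ivl a b s -> model_set m (F (X s))) /\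
  (* the three are pairwise inequivalent, even locally *)
  (forall (m m' : model) (F : pt -> pt) (c d : R),
      m <> m' -> similarity F -> c < d ->
      (forall s, c < s < d -> in_ivl (dom_lo m) (dom_hi m) s) ->
      ~ (forall s, c < s < d -> model_set m' (F (gamma m s)))).

Proof.
  split; [|split].
  - intros m. destruct m.
    + destruct m1_props as (h1&h2&h3). split; [auto|split; [auto|split; [auto|]]]. apply m1_set.
    + destruct m2_props as (h1&h2&h3). split; [auto|split; [auto|split; [auto|]]]. apply m2_set.
    + destruct m3_props as (h1&h2&h3). split; [auto|split; [auto|split; [auto|]]]. apply m3_set.
  - intros a b X k C H1 H2 H3 H4 H5. exact (part2 a b X k C H1 H2 H3 H4 H5).
  - intros m m' F c d H1 H2 H3 H4. exact (part3 m m' F c d H1 H2 H3 H4).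
Qed.
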